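(* Let $\{G_i\}$ be a family of connected graphs with common induced subgraph $J$, embedded as $J_i\subseteq G_i$, such that $\{(G_i|J_i)\}$ is isometric, and let $H=\amalg\{(G_i|J_i)\}$. If, for each $i$, $A_i\subseteq V(G_i)$ is a local metric set for $G_i$, then $\bigcup_i A_i$ (viewed as a subset of $V(H)$) is a local metric set for $H$.
   Context: $d_G$ is shortest-path distance in $G$. A vertex $w$ distinguishes an edge $uv$ of $G$ if $d_G(w,u)\neq d_G(w,v)$; a local metric set of $G$ is a set $B\subseteq V(G)$ such that every edge of $G$ is distinguished by some vertex of $B$. $J$ is a common induced subgraph of each $G_i$ via injective maps $\iota_i:V(J)\to V(G_i)$ with $\iota_i(x)\iota_i(y)\in E(G_i)$ iff $xy\in E(J)$; $J_i$ is the induced image, $x^i=\iota_i(x)$. $H=\amalg\{(G_i|J_i)\}$ is obtained from the disjoint union of the $G_i$ by identifying, for each $x\in V(J)$, all $x^i$ into one vertex; each $G_i$ is regarded as a subgraph of $H$. The family is isometric if $d_{G_i}(a^i,b^i)=d_{G_j}(a^j,b^j)$ for all $i,j$ and $a,b\in V(J)$. *)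

(* Defs.v *)
From mathcomp Require Import all_boot.
Set Implicit Arguments. Unset Strict Implicit. Unset Printing Implicit Defensive.

Definition ball (T : finType) (e : rel T) (k : nat) (u : T) : {set T} :=
  iter k (fun S => S :|: [set y | [exists x in S, e x y]]) [set u].

(* shortest-path distance d_G(u,v); for unreachable v it takes the
   sentinel value #|T| (never used for connected graphs). *)
Definition gdist (T : finType) (e : rel T) (u v : T) : nat :=
  \big[minn/#|T|]_(0 <= k < #|T| | v \in ball e k u) k.

Definition connected_graph (T : finType) (e : rel T) : Prop :=
  forall u v : T, connect e u v.

Definition distinguishes (T : finType) (e : rel T) (w u v : T) : Prop :=
  gdist e w u <> gdist e w v.

Definition local_metric_set (T : finType) (e : rel T) (B : {set T}) : Prop :=
  forall u v : T, e u v -> exists2 w, w \in B & distinguishes e w u v.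

(* Amalgamation H = \amalg (G_i | J_i).  Its vertex set is
   V(J) + { (i, v) | v in V(G_i) \ J_i }: each x in V(J) is the single
   vertex obtained by identifying all copies x^i. *)
Section Amalgam.
Variables (I : finType) (V : I -> finType) (VJ : finType)
  (e : forall i, rel (V i)) (iota : forall i, VJ -> V i).

Definition pickJ (i : I) (v : V i) : option VJ := [pick x | iota i x == v].

Definition restV (i : I) : finType := {v : V i | pickJ v == None}.

Definition amalgV : finType := (VJ + {i : I & restV i})%type.

Definition amalg_inj (i : I) (v : V i) : amalgV :=
  (match pickJ v as o return pickJ v = o -> amalgV with
   | Some x => fun _ => inl x
   | None => fun h => inr (Tagged restV (exist (fun w => pickJ w == None) v (introT eqP h)))
   end) erefl.

Definition amalgE : rel amalgV := fun a b =>
  [exists i : I, [exists u : V i, [exists w : V i,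
     [&& e u w, amalg_inj u == a & amalg_inj w == b]]]].

End Amalgam.

(* Main.v *)
Require Import Defs.
From mathcomp Require Import all_boot.
Set Implicit Arguments. Unset Strict Implicit. Unset Printing Implicit Defensive.

Section G.
Variables (T : finType) (e : rel T).

Lemma ball0 u : ball e 0 u = [set u]. Proof. by []. Qed.
Lemma ballS k u : ball e k.+1 u = ball e k u :|: [set y | [exists x in ball e k u, e x y]].
Proof. by []. Qed.

Lemma ball_refl u : u \in ball e 0 u. Proof. by rewrite ball0 set11. Qed.

Lemma ball_sub1 k u v : v \in ball e k u -> v \in ball e k.+1 u.
Proof. by move=> h; rewrite ballS in_setU h. Qed.

Lemma ball_mono k m u v : k <= m -> v \in ball e k u -> v \in ball e m u.
Proof.
move=> /subnK <-; elim: (m - k) => [|n IH] //= h.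
by apply: ball_sub1; apply: IH.
Qed.

Lemma ball_edge k u x y : x \in ball e k u -> e x y -> y \in ball e k.+1 u.
Proof.
move=> hx hxy; rewrite ballS in_setU; apply/orP; right.
by rewrite inE; apply/existsP; exists x; rewrite hx.
Qed.

Lemma ball_trans k m a b c : b \in ball e k a -> c \in ball e m b -> c \in ball e (k + m) a.
Proof.
move=> hb; elim: m c => [|m IH] c.
  by rewrite ball0 inE addn0 => /eqP ->.
rewrite ballS in_setU => /orP [h|]; first by rewrite addnS; apply: ball_sub1; apply: IH.
rewrite inE => /existsP [x /andP [hx hxc]].
by rewrite addnS; apply: (ball_edge (IH _ hx)).
Qed.

Lemma ball_path u s : path e u s -> last u s \in ball e (size s) u.
Proof.
elim: s u => [|x s IH] u; first by move=> _; apply: ball_refl.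
rewrite [path _ _ _]/= => /andP [hux hp].
rewrite [last _ _]/= [size _]/=.
have := ball_trans (ball_edge (ball_refl u) hux) (IH _ hp).
by rewrite add1n.
Qed.

Lemma gdist_le k u v : v \in ball e k u -> gdist e u v <= k.
Proof.
move=> h; rewrite /gdist.
case: (ltnP k #|T|) => hk.
  have : k \in index_iota 0 #|T| by rewrite mem_index_iota.
  elim: (index_iota 0 #|T|) => [//|j s IHs].
  rewrite in_cons big_cons => /orP [/eqP <-|hs].
    by rewrite h geq_minl.
  case: ifP => _; last exact: IHs.
  by rewrite geq_min IHs ?orbT.
apply: leq_trans hk.
elim/big_rec: _ => [//|i x _ hx]; by rewrite geq_min hx orbT.
Qed.

Lemma gdist_ball u v : gdist e u v < #|T| -> v \in ball e (gdist e u v) u.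
Proof.
rewrite /gdist.
elim/big_ind: _ => [|x y hx hy|k hk].
- by rewrite ltnn.
- rewrite /minn; case: ifP => _ h.
  + by apply: hx.
  + by apply: hy.
- by [].
Qed.

Lemma gdist_conn u v : connect e u v -> gdist e u v < #|T|.
Proof.
move=> /connectP [p hp ->].
case/shortenP: hp => p' hp' hu _.
apply: (leq_ltn_trans (gdist_le (ball_path hp'))).
have := max_card (mem (u :: p')).
by rewrite (card_uniqP hu).
Qed.

Lemma ball_gdist u v k : connect e u v -> (v \in ball e k u) = (gdist e u v <= k).
Proof.
move=> hc; apply/idP/idP; first exact: gdist_le.
by move=> h; apply: (ball_mono h); apply: gdist_ball; apply: gdist_conn.
Qed.

End G.

Section A.
Variables (I : finType) (V : I -> finType) (VJ : finType)
  (e : forall i, rel (V i)) (iota : forall i, VJ -> V i).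

Local Notation inj := (@amalg_inj I V VJ iota).

Lemma pickJ_some i (v : V i) x : pickJ iota v = Some x -> iota i x = v.
Proof. rewrite /pickJ; case: pickP => [y /eqP h [<-]//|_ //]. Qed.

Definition Spec i (v : V i) (t : amalgV iota) :=
  (exists x, t = inl x /\ iota i x = v) \/
  (exists r : restV iota i, t = inr (Tagged (@restV I V VJ iota) r) /\ val r = v).

Lemma spec_gen i (v : V i) (o : option VJ) (H : pickJ iota v = o) :
  Spec v ((match o as o0 return pickJ iota v = o0 -> amalgV iota with
   | Some x => fun _ => inl x
   | None => fun h => inr (Tagged (@restV I V VJ iota) (exist (fun w => pickJ iota w == None) v (introT eqP h)))
   end) H).
Proof.
destruct o as [x|].
  by left; exists x; split => //; apply: pickJ_some.
by right; eexists; split.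
Qed.

Lemma inj_spec i (v : V i) :
  (exists x, inj v = inl x /\ iota i x = v) \/
  (exists r : restV iota i, inj v = inr (Tagged (@restV I V VJ iota) r) /\ val r = v).
Proof. exact: (spec_gen (erefl (pickJ iota v))). Qed.

Lemma inj_inj i : injective (@inj i).
Proof.
move=> v v'.
case: (inj_spec v) => [[x [-> hx]]|[r [-> hr]]];
case: (inj_spec v') => [[x' [-> hx']]|[r' [-> hr']]] //.
- by case=> ex; rewrite -hx -hx' ex.
- move=> /(congr1 (fun z => match z with inl _ => r | inr t => tagged_as (Tagged (@restV I V VJ iota) r) t end)).
  rewrite !tagged_asE => er; by rewrite -hr -hr' er.
Qed.

Lemma inj_cross i j (v : V i) (w : V j) : i != j -> inj v = inj w ->
  exists x, iota i x = v /\ iota j x = w.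
Proof.
move=> hij.
case: (inj_spec v) => [[x [-> hx]]|[r [-> hr]]];
case: (inj_spec w) => [[x' [-> hx']]|[r' [-> hr']]] //.
- by case=> ex; exists x; split => //; rewrite ex.
- by move=> /(congr1 (fun z => match z with inl _ => i | inr t => tag t end)) /= h; rewrite h eqxx in hij.
Qed.

End A.

Section M.
Unset Implicit Arguments.
Variables (I : finType) (V : I -> finType) (VJ : finType)
  (e : forall i, rel (V i)) (iota : forall i, VJ -> V i).
Hypothesis conn : forall i : I, connected_graph (e i).
Hypothesis iso : forall (i j : I) (a b : VJ), gdist (e i) (iota i a) (iota i b) = gdist (e j) (iota j a) (iota j b).

Set Implicit Arguments.
Local Notation inj := (@amalg_inj I V VJ iota).
Local Notation E := (@amalgE I V VJ e iota).

Lemma edge_inj i (u w : V i) : e i u w -> E (inj u) (inj w).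
Proof.
move=> h; apply/existsP; exists i; apply/existsP; exists u; apply/existsP; exists w.
by rewrite h !eqxx.
Qed.

Lemma ball_inj i (p q : V i) k : q \in ball (e i) k p -> inj q \in ball E k (inj p).
Proof.
elim: k q => [|k IH] q.
  by rewrite ball0 inE => /eqP ->; apply: ball_refl.
rewrite ballS in_setU => /orP [h|]; first by apply: ball_sub1; apply: IH.
rewrite inE => /existsP [x /andP [hx hxq]].
by apply: (ball_edge (IH _ hx)); apply: edge_inj.
Qed.

Lemma transfer i j x y m : iota j y \in ball (e j) m (iota j x) -> iota i y \in ball (e i) m (iota i x).
Proof.
move=> h; rewrite ball_gdist; last exact: conn.
by rewrite (iso i j); apply: gdist_le.
Qed.

Lemma claim i (p : V i) k b : b \in ball E k (inj p) ->
  (forall w : V i, inj w = b -> w \in ball (e i) k p) /\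
  (forall j (v : V j), j != i -> inj v = b -> exists x k1 k2,
      [/\ k1 + k2 <= k, iota i x \in ball (e i) k1 p & v \in ball (e j) k2 (iota j x)]).
Proof.
elim: k b => [|k IH] b.
  rewrite ball0 inE => /eqP ->; split.
    by move=> w /(@inj_inj _ _ _ _ i) ->; apply: ball_refl.
  move=> j v hji /(inj_cross hji) [x [hx hx']].
  by exists x, 0, 0; rewrite -hx -hx'; split => //; apply: ball_refl.
rewrite ballS in_setU => /orP [hb|].
  case: (IH _ hb) => h1 h2; split.
    by move=> w hw; apply: ball_sub1; apply: h1.
  move=> j v hji hv; case: (h2 j v hji hv) => x [k1 [k2 [hk h3 h4]]].
  by exists x, k1, k2; split => //; apply: leqW.
rewrite inE => /existsP [a /andP [ha]].
move=> /existsP [j0 /existsP [u /existsP [w /and3P [huw /eqP hu /eqP hw]]]].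
case: (IH _ ha) => h1 h2.
case: (eqVneq j0 i) => hj0.
  subst j0.
  have hwb : w \in ball (e i) k.+1 p by apply: (ball_edge (h1 _ hu)).
  split.
    by move=> w' hw'; move: hw'; rewrite -hw => /(@inj_inj _ _ _ _ i) ->.
  move=> j v hji; rewrite -hw => /(inj_cross hji) [x [hx hx']].
  by exists x, k.+1, 0; rewrite addn0 -hx; split => //; [rewrite hx'|apply: ball_refl].
case: (h2 j0 u hj0 hu) => x [k1 [k2 [hk hx hux]]].
have hwx : w \in ball (e j0) k2.+1 (iota j0 x) by apply: ball_edge hux huw.
have key : forall y, iota j0 y = w -> iota i y \in ball (e i) (k1 + k2.+1) p.
  move=> y hy; apply: (ball_trans hx); apply: (@transfer i j0 x y); by rewrite hy.
have hk' : k1 + k2.+1 <= k.+1 by rewrite addnS.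
split.
  move=> w' hw'; have hne : j0 != i by [].
  move: hw'; rewrite -hw => /esym /(inj_cross hne) [y [hy hy']].
  by rewrite -hy'; apply: (ball_mono hk'); apply: key.
move=> j v hji; rewrite -hw.
case: (eqVneq j j0) => hjj0.
  subst j0 => /(@inj_inj _ _ _ _ j) ->.
  by exists x, k1, k2.+1.
move=> /(inj_cross hjj0) [y [hy hy']].
exists y, (k1 + k2.+1), 0; rewrite addn0 -hy; split => //; last by apply: ball_refl.
exact: key.
Qed.

Lemma inj_iso i (p q : V i) : gdist E (inj p) (inj q) = gdist (e i) p q.
Proof.
have hc := gdist_conn (conn i p q).
have hb := gdist_ball hc.
have hle : gdist E (inj p) (inj q) <= gdist (e i) p q by apply: gdist_le; apply: ball_inj.
have hcard : #|V i| <= #|amalgV iota| by apply: leq_card; apply: inj_inj.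
have hlt : gdist E (inj p) (inj q) < #|amalgV iota|.
  by apply: leq_ltn_trans hle _; apply: leq_trans hc hcard.
apply/eqP; rewrite eqn_leq hle /=.
have := gdist_ball hlt.
case/claim => h1 _.
exact: gdist_le (h1 q erefl).
Qed.

End M.

Theorem lemma4 (I : finType) (V : I -> finType) (VJ : finType)
  (e : forall i, rel (V i)) (eJ : rel VJ) (iota : forall i, VJ -> V i)
  (A : forall i, {set V i}) :
  (* each G_i is a connected simple graph *)
  (forall i, symmetric (e i)) ->
  (forall i, irreflexive (e i)) ->
  (forall i, connected_graph (e i)) ->
  (* J is a common induced subgraph via injective maps iota_i *)
  (forall i, injective (iota i)) ->
  (forall i x y, e i (iota i x) (iota i y) = eJ x y) ->
  (* the family is isometric *)
  (forall i j a b, gdist (e i) (iota i a) (iota i b) = gdist (e j) (iota j a) (iota j b)) ->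
  (* each A_i is a local metric set of G_i *)
  (forall i, local_metric_set (e i) (A i)) ->
  local_metric_set (@amalgE I V VJ e iota)
    (\bigcup_(i : I) [set @amalg_inj I V VJ iota i a | a in A i]).
Proof.
move=> _ _ conn _ _ iso loc a b.
move=> /existsP [j /existsP [u /existsP [w /and3P [huw /eqP <- /eqP <-]]]].
case: (loc j u w huw) => w0 hw0 hd.
exists (amalg_inj iota w0).
  by apply/bigcupP; exists j => //; apply/imsetP; exists w0.
rewrite /distinguishes !(inj_iso conn iso).
exact: hd.
Qed.
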